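(* Fix a maturity $t$ and an underlying security. For each strike $K\ge 0$ let $C(K)$ and $P(K)$ denote the prices of the European call and put of strike $K$ and maturity $t$, and let $F$ be the tradable forward price for delivery at $t$. Assume put-call parity holds for every strike: $C(K)-P(K)+K=F$ for all $K\ge 0$. Assume calls and puts are valued by expectation of terminal payoff, i.e. there exist Borel probability measures $\mu_1,\mu_2$ on $\Omega=[0,\infty)$ with finite first moment such that $C(K)=\int_\Omega (S-K)^+\,\mathrm{d}\mu_1(S)$ and $P(K)=\int_\Omega (K-S)^+\,\mathrm{d}\mu_2(S)$ for all $K\ge 0$. Then there is a unique Borel probability measure $\mu_Q$ on $\Omega$ that prices both all European calls and all European puts of maturity $t$ by expectation of terminal payoff, i.e. $C(K)=\int_\Omega (S-K)^+\,\mathrm{d}\mu_Q(S)$ and $P(K)=\int_\Omega (K-S)^+\,\mathrm{d}\mu_Q(S)$ for every $K\ge 0$.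
   Context: $\Omega=[0,\infty)$ is the set of possible values $S=S_t$ of the underlying at maturity $t$. Option prices and the forward price are expressed in units payable at maturity (undiscounted), so that put-call parity reads $C(K)-P(K)+K=F$. The forward is assumed to exist and be tradable; it may be the arbitrage (risk-neutral) forward $S_0e^{(r-\delta)(t-t_0)}$ or any other tradable forward price. *)

(* Defs.v *)
(* Omega = [0, +oo) is modelled as the Borel
   measurable space R (R : realType) with measures concentrated on `[0, +oo[. *)
From mathcomp Require Import all_boot all_order all_algebra.
From mathcomp Require Import all_classical all_reals all_analysis.
Unset Printing Implicit Defensive.
Import Order.TTheory GRing.Theory Num.Theory.
Local Open Scope classical_set_scope.
Local Open Scope ring_scope.

Definition Omega (R : realType) : set R := `[0%R, +oo[%classic.

Definition on_Omega (R : realType) (mu : probability R R) : Prop :=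
  mu (Omega R) = 1%E.

Definition finite_first_moment (R : realType) (mu : probability R R) : Prop :=
  mu.-integrable (Omega R) (fun S => S%:E).

Definition call_value (R : realType) (mu : probability R R) (K : R) : \bar R :=
  (\int[mu]_(S in Omega R) (Num.max (S - K) 0)%:E)%E.

Definition put_value (R : realType) (mu : probability R R) (K : R) : \bar R :=
  (\int[mu]_(S in Omega R) (Num.max (K - S) 0)%:E)%E.

(* Main.v *)
Require Import Defs.
From mathcomp Require Import all_boot all_order all_algebra.
From mathcomp Require Import all_classical all_reals all_analysis.
From mathcomp Require Import measurable_realfun lra.
Import Order.TTheory GRing.Theory Num.Theory numFieldNormedType.Exports.
Local Open Scope classical_set_scope.
Local Open Scope ring_scope.

Section helpers.
Variable R : realType.

Lemma mOmega : measurable (Omega R).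
Proof. exact: measurable_itv. Qed.

Lemma mpos (f : R -> R) : continuous f ->
  measurable_fun (Omega R) (fun S => (f S)%:E).
Proof.
move=> cf; apply/measurable_EFinP; apply: measurable_funS (@continuous_measurable_fun R f cf) => //.
Qed.

Lemma mcall (K : R) : measurable_fun (Omega R) (fun S => (Num.max (S - K) 0)%:E).
Proof.
apply: mpos => x; apply: (@continuous_max R R (fun S => S - K) (fun _ => 0) x); [apply: cvgB; [exact: cvg_id|exact: cvg_cst]|exact: cvg_cst].
Qed.

Lemma mput (K : R) : measurable_fun (Omega R) (fun S => (Num.max (K - S) 0)%:E).
Proof.
apply: mpos => x; apply: (@continuous_max R R (fun S => K - S) (fun _ => 0) x); [apply: cvgB; [exact: cvg_cst|exact: cvg_id]|exact: cvg_cst].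
Qed.


Local Open Scope ereal_scope.

Lemma put0 (mu : probability R R) : put_value R mu 0 = 0.
Proof.
rewrite /put_value -(integral0 mu (Omega R)); apply: eq_integral => x.
rewrite inE /Omega /= in_itv /= andbT => x0.
by rewrite /cst sub0r; congr (_%:E); apply/max_idPr; rewrite lerNl oppr0.
Qed.

Lemma put_call (mu : probability R R) (K : R) : (0 <= K)%R -> on_Omega R mu ->
  put_value R mu K + call_value R mu 0 = call_value R mu K + K%:E.
Proof.
move=> K0 muO.
have -> : K%:E = \int[mu]_(x in Omega R) cst K%:E x.
  rewrite (integral_cst mu mOmega).
  by rewrite [X in (_ * X)%E](_ : _ = 1) ?mule1 //; exact: muO.
have g0 : forall (f : R -> R) (x : R), Omega R x -> 0 <= (Num.max (f x) 0)%:E.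
  by move=> f x _; rewrite lee_fin le_max lexx orbT.
rewrite /put_value /call_value.
rewrite -(ge0_integralD mu mOmega (g0 (fun x => K - x)%R) (mput K) (g0 (fun x => x - 0)%R) (mcall 0)).
rewrite -(ge0_integralD mu mOmega (g0 (fun x => x - K)%R) (mcall K) (fun x _ => (K0 : (0 <= K%:E)%E)) (measurable_cst _)).
apply: eq_integral => x; rewrite inE /Omega /= in_itv /= andbT => x0.
rewrite /cst -!EFinD; congr (_%:E); rewrite subr0.
rewrite (max_idPl x0).
case: (leP (K - x)%R 0%R) => h1; case: (leP (x - K)%R 0%R) => h2; lra.
Qed.

Lemma in_oitv (a x : R) : (x \in `]a, +oo[%classic) = (a < x)%R.
Proof. by apply/idP/idP => [/set_mem|h]; [rewrite /= in_itv /= andbT|apply/mem_set; rewrite /= in_itv /= andbT]. Qed.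

Lemma mind (a : R) : measurable_fun (Omega R) (fun x => (\1_(`]a, +oo[%classic) x)%:E : \bar R).
Proof. by apply/measurable_EFinP; apply: measurable_indic; exact: measurable_itv. Qed.

Lemma int_ind (mu : probability R R) (a h : R) : (0 <= a)%R -> (0 <= h)%R ->
  \int[mu]_(x in Omega R) (h%:E * (\1_(`]a, +oo[%classic) x)%:E) = h%:E * mu `]a, +oo[%classic.
Proof.
move=> a0 h0.
have i0 : forall x, Omega R x -> 0 <= (\1_(`]a, +oo[%classic) x)%:E :> \bar R.
  by move=> x _; rewrite lee_fin indicE.
rewrite (ge0_integralZl_EFin mu mOmega i0 (mind a) h0).
rewrite (integral_indic mu mOmega (measurable_itv _)).
congr (_ * mu _); apply/setIidl => x /=; rewrite /Omega /= !in_itv /= !andbT => ax.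
exact: le_trans (ltW ax).
Qed.

Lemma tail_a (mu : probability R R) (K h : R) : (0 <= K)%R -> (0 < h)%R ->
  call_value R mu (K + h)%R + h%:E * mu `](K + h)%R, +oo[%classic <= call_value R mu K.
Proof.
move=> K0 h0.
have Kh0 : (0 <= K + h)%R by lra.
rewrite -(@int_ind mu _ _ Kh0 (ltW h0)) /call_value -ge0_integralD //; first last.
- exact: emeasurable_funM (measurable_cst _) (mind _).
- by move=> x _; rewrite -EFinM lee_fin mulr_ge0 // ?indicE // ltW.
- exact: mcall.
- by move=> x _; rewrite lee_fin le_max lexx orbT.
- exact: mOmega.
apply: ge0_le_integral.
- exact: mOmega.
- by move=> x _; rewrite -EFinM -EFinD lee_fin addr_ge0 ?le_max ?lexx ?orbT // mulr_ge0 // ?indicE // ltW.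
- by apply: emeasurable_funD; [exact: mcall|exact: emeasurable_funM (measurable_cst _) (mind _)].
- exact: mcall.
move=> x; rewrite /Omega /= in_itv /= andbT => x0.
rewrite -EFinM -EFinD lee_fin indicE in_oitv.
case: (ltP (K + h)%R x) => hx /=; case: (leP (x - (K + h))%R 0%R) => h1; case: (leP (x - K)%R 0%R) => h2; lra.
Qed.

Lemma tail_b (mu : probability R R) (K h : R) : (0 <= K)%R -> (0 < h)%R ->
  call_value R mu K <= call_value R mu (K + h)%R + h%:E * mu `]K, +oo[%classic.
Proof.
move=> K0 h0.
rewrite -(@int_ind mu _ _ K0 (ltW h0)) /call_value -ge0_integralD //; first last.
- exact: emeasurable_funM (measurable_cst _) (mind _).
- by move=> x _; rewrite -EFinM lee_fin mulr_ge0 // ?indicE // ltW.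
- exact: mcall.
- by move=> x _; rewrite lee_fin le_max lexx orbT.
- exact: mOmega.
apply: ge0_le_integral.
- exact: mOmega.
- by move=> x _; rewrite lee_fin le_max lexx orbT.
- exact: mcall.
- by apply: emeasurable_funD; [exact: mcall|exact: emeasurable_funM (measurable_cst _) (mind _)].
move=> x; rewrite /Omega /= in_itv /= andbT => x0.
rewrite -EFinM -EFinD lee_fin indicE in_oitv.
case: (ltP K x) => hx /=; case: (leP (x - (K + h))%R 0%R) => h1; case: (leP (x - K)%R 0%R) => h2; lra.
Qed.

Lemma tail_le (nu mu : probability R R) (K h : R) : (0 <= K)%R -> (0 < h)%R ->
  call_value R nu K = call_value R mu K ->
  call_value R nu (K + h)%R = call_value R mu (K + h)%R ->
  call_value R mu (K + h)%R \is a fin_num ->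
  nu `](K + h)%R, +oo[%classic <= mu `]K, +oo[%classic.
Proof.
move=> K0 h0 e1 e2 fin.
have ha := @tail_a nu _ _ K0 h0; have hb := @tail_b mu _ _ K0 h0.
rewrite e1 e2 in ha.
have := le_trans ha hb.
by rewrite leeD2lE // lee_pmul2l // lte_fin.
Qed.

Lemma tail_rc (nu : probability R R) (K : R) (c : \bar R) :
  (forall n : nat, nu `](K + n.+1%:R^-1)%R, +oo[%classic <= c) ->
  nu `]K, +oo[%classic <= c.
Proof.
move=> H.
pose F := fun n : nat => `](K + n.+1%:R^-1)%R, +oo[%classic.
have U : \bigcup_n F n = `]K, +oo[%classic.
  apply/seteqP; split => x /=.
    move=> [n _]; rewrite /F /= !in_itv /= !andbT => hx.
    apply: lt_trans hx; rewrite ltrDl invr_gt0 ltr0n //.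
  rewrite in_itv /= andbT => /ltr_add_invr [k hk].
  by exists k => //; rewrite /F /= in_itv /= andbT.
have mF : forall n, measurable (F n) by move=> n; exact: measurable_itv.
have mU : measurable (\bigcup_n F n) by rewrite U; exact: measurable_itv.
have nd : {homo F : n m / (n <= m)%N >-> (n <= m)%O}.
  move=> n m nm; apply/subsetPset => x; rewrite /F /= !in_itv /= !andbT.
  apply: le_lt_trans; rewrite lerD2l lef_pV2 ?posrE ?ltr0n // ler_nat ltnS //.
have cv := @nondecreasing_cvg_mu _ _ _ nu _ mF mU nd.
rewrite -U -(cvg_lim _ cv) //.
apply: lime_le; first by apply/cvg_ex; eexists; exact: cv.
by apply: nearW => n; exact: H.
Qed.

Lemma tail_le1 (nu mu : probability R R) (K : R) : (0 <= K)%R ->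
  (forall K, (0 <= K)%R -> call_value R nu K = call_value R mu K) ->
  (forall K, (0 <= K)%R -> call_value R mu K \is a fin_num) ->
  nu `]K, +oo[%classic <= mu `]K, +oo[%classic.
Proof.
move=> K0 e f; apply: tail_rc => n.
have h0 : (0 < n.+1%:R^-1 :> R)%R by rewrite invr_gt0 ltr0n.
have Kh0 : (0 <= K + n.+1%:R^-1)%R by apply: addr_ge0 => //; exact: ltW.
exact: tail_le K0 h0 (e _ K0) (e _ Kh0) (f _ Kh0).
Qed.

Lemma one_tail (nu : probability R R) (K : R) : on_Omega R nu -> (K < 0)%R ->
  nu `]K, +oo[%classic = 1.
Proof.
move=> nO K0; apply/le_anti/andP; split.
  by apply: probability_le1; exact: measurable_itv.
rewrite -[X in X <= _]nO; apply: le_measure; rewrite ?inE; try exact: measurable_itv.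
move=> x; rewrite /Omega /= !in_itv /= !andbT => x0; exact: lt_le_trans x0.
Qed.

Lemma tail_eq (nu mu : probability R R) : on_Omega R nu -> on_Omega R mu ->
  (forall K, (0 <= K)%R -> call_value R nu K = call_value R mu K) ->
  (forall K, (0 <= K)%R -> call_value R mu K \is a fin_num) ->
  forall K, nu `]K, +oo[%classic = mu `]K, +oo[%classic.
Proof.
move=> nO mO e f K; case: (ltP K 0%R) => K0.
  by rewrite !one_tail.
apply/le_anti/andP; split; first exact: tail_le1.
apply: tail_le1 => // K1 K10; first by rewrite e.
by rewrite e // f.
Qed.

Lemma ocitv_eq (nu mu : probability R R) :
  (forall K, nu `]K, +oo[%classic = mu `]K, +oo[%classic) ->
  forall X, ocitv X -> nu X = mu X.
Proof.
move=> e X /ocitvP [->|[[a b] /= ab ->]]; first by rewrite !measure0.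
have -> : `]a, b]%classic = `]a, +oo[%classic `\` `]b, +oo[%classic.
  apply/seteqP; split => x /=; rewrite !in_itv /= !andbT.
    by move=> /andP[ax xb]; split => //; apply/negP; rewrite -leNgt.
  by move=> [ax /negP]; rewrite -leNgt => xb; apply/andP.
have sub : `]b, +oo[%classic `<=` `]a, +oo[%classic.
  by move=> x /=; rewrite !in_itv /= !andbT; exact: lt_trans.
rewrite !measureD ?(setIidr sub) //; try exact: measurable_itv.
- by congr (_ - _); exact: e.
- exact: le_lt_trans (probability_le1 _ (measurable_itv _)) (ltey _).
- exact: le_lt_trans (probability_le1 _ (measurable_itv _)) (ltey _).
Qed.

Lemma prob_eq (nu mu : probability R R) : (forall X, ocitv X -> nu X = mu X) ->
  forall A, measurable A -> nu A = mu A.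
Proof.
move=> e; apply: (measure_unique (@ocitv R) (fun k : nat => `](- k%:R)%R, k%:R]%classic)).
- by [].
- exact: ocitvI.
- by move=> k; exact: is_ocitv.
- apply/seteqP; split => // x _.
  have := archi_boundP (normr_ge0 x); rewrite ltr_norml => /andP[h1 h2].
  by exists (Num.Def.archi_bound `|x|) => //=; rewrite in_itv /= h1 ltW.
- exact: e.
- by move=> k; exact: le_lt_trans (probability_le1 _ (measurable_itv _)) (ltey _).
Qed.

End helpers.

Theorem theorem1 (R : realType) (C P : R -> R) (F : R)
  (mu1 mu2 : probability R R) :
  (forall K : R, 0 <= K -> C K - P K + K = F) ->
  on_Omega R mu1 -> on_Omega R mu2 ->
  finite_first_moment R mu1 -> finite_first_moment R mu2 ->
  (forall K : R, 0 <= K -> (C K)%:E = call_value R mu1 K) ->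
  (forall K : R, 0 <= K -> (P K)%:E = put_value R mu2 K) ->
  exists muQ : probability R R,
    [/\ on_Omega R muQ,
        (forall K : R, 0 <= K -> (C K)%:E = call_value R muQ K),
        (forall K : R, 0 <= K -> (P K)%:E = put_value R muQ K) &
        (forall nu : probability R R,
           on_Omega R nu ->
           (forall K : R, 0 <= K -> (C K)%:E = call_value R nu K) ->
           (forall K : R, 0 <= K -> (P K)%:E = put_value R nu K) ->
           forall A : set R, measurable A -> A `<=` Omega R -> nu A = muQ A)].
Proof.
move=> par O1 O2 _ _ HC HP.
have P0 : P 0 = 0.
  have : (P 0)%:E = 0%:E by rewrite HP // put0.
  by case.
exists mu1; split => //.
- move=> K K0.
  have := @put_call _ mu1 K K0 O1; rewrite -!HC // => e.
  rewrite -[put_value _ _ _](@addeK _ (C 0)%:E) // e.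
  suff -> : P K = C K + K - C 0 by rewrite EFinB EFinD.
  have := par K K0; have := par 0 (lexx 0); rewrite P0; lra.
- move=> nu nO hC _ A mA _.
  apply: prob_eq => //; apply: ocitv_eq; apply: tail_eq => //.
  + by move=> K K0; rewrite -hC // HC.
  + by move=> K K0; rewrite -HC.
Qed.
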